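(* Assume $0<a,b<1$, $r>2$, $s>2$, $r>as$, $s>br$. Let $\underline\alpha\in(\tilde\alpha,1)$, $\underline\beta\in(\tilde\beta,1)$, $\bar\alpha\in(\underline\alpha,1)$, $\bar\beta\in(\underline\beta,1)$, $h\in(0,\min\{\underline c_1(\underline\alpha,\underline\beta),\underline c_2(\underline\alpha,\underline\beta)\})$. Let $(\alpha_n)_{n\in\mathbb N}$, $(\beta_n)_{n\in\mathbb N}$ satisfy $\alpha_n\in(\underline\alpha,\bar\alpha)$, $\beta_n\in(\underline\beta,\bar\beta)$ for all $n$, and let $(x_n,y_n)$ solve $$x_{n+1}=x_n[(1-\alpha_{n+1})e^{r-x_n-ay_n}+\alpha_{n+1}],\quad y_{n+1}=y_n[(1-\beta_{n+1})e^{s-bx_n-y_n}+\beta_{n+1}],\quad n\in\mathbb N_0,$$ with $x_0,y_0>0$. Then: (a) if $(x_0,y_0)\in D_{\underline\alpha,\underline\beta}$ then $(x_n,y_n)\in D_{\underline\alpha,\underline\beta}$ for all $n\in\mathbb N$; (b) if $(x_0,y_0)\in D_{\underline\alpha,\underline\beta}(h)$ then $(x_n,y_n)\in D_{\underline\alpha,\underline\beta}(h)$ for all $n\in\mathbb N$; (c) if $(x_0,y_0)\notin D_{\underline\alpha,\underline\beta}(h)$, there is $\tilde S=\tilde S(x_0,y_0,\underline\alpha,\underline\beta,\bar\alpha,\bar\beta,h)\in\mathbb N$ (not depending on the particular sequences $\alpha_n,\beta_n$) such that $(x_n,y_n)\in D_{\underline\alpha,\underline\beta}(h)$ for all $n\ge\tilde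 S$.
   Context: Let $f(\alpha,x,y)=x[(1-\alpha)e^{r-x-ay}+\alpha]$, $g(\beta,x,y)=y[(1-\beta)e^{s-bx-y}+\beta]$. Define $\mathcal H_1(\alpha)=\max\{(1-\alpha)e^{r-1}+2\alpha,\,r\}$, $\mathcal H_2(\beta)=\max\{(1-\beta)e^{s-1}+2\beta,\,s\}$, $c_1(\beta)=r-a\mathcal H_2(\beta)$, $c_2(\alpha)=s-b\mathcal H_1(\alpha)$, $\tilde\alpha=\max\{\frac{e^{r-1}-s/b}{e^{r-1}-2},0\}$, $\tilde\beta=\max\{\frac{e^{s-1}-r/a}{e^{s-1}-2},0\}$. For $\alpha\in(\tilde\alpha,1)$, $\beta\in(\tilde\beta,1)$: $\underline c_1(\alpha,\beta)=\min\{f(\alpha,x,y):x\in[c_1(\beta),\mathcal H_1(\alpha)],y\in[0,\mathcal H_2(\beta)]\}$, $\underline c_2(\alpha,\beta)=\min\{g(\beta,x,y):x\in[0,\mathcal H_1(\alpha)],y\in[c_2(\alpha),\mathcal H_2(\beta)]\}$, $D_{\alpha,\beta}=[\underline c_1(\alpha,\beta),\mathcal H_1(\alpha)]\times[\underline c_2(\alpha,\beta),\mathcal H_2(\beta)]$, $D_{\alpha,\beta}(h)=[\underline c_1(\alpha,\beta)-h,\mathcal H_1(\alpha)]\times[\underline c_2(\alpha,\beta)-h,\mathcal H_2(\beta)]$. *)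

(* Defs.v *)
From Stdlib Require Import Reals Lra ClassicalEpsilon.
Open Scope R_scope.

Definition fmap (r a al x y : R) : R := x * ((1 - al) * exp (r - x - a * y) + al).
Definition gmap (s b be x y : R) : R := y * ((1 - be) * exp (s - b * x - y) + be).

Definition H1 (r al : R) : R := Rmax ((1 - al) * exp (r - 1) + 2 * al) r.
Definition H2 (s be : R) : R := Rmax ((1 - be) * exp (s - 1) + 2 * be) s.
Definition c1 (a r s be : R) : R := r - a * H2 s be.
Definition c2 (b r s al : R) : R := s - b * H1 r al.
Definition alpha_t (b r s : R) : R := Rmax ((exp (r - 1) - s / b) / (exp (r - 1) - 2)) 0.
Definition beta_t (a r s : R) : R := Rmax ((exp (s - 1) - r / a) / (exp (s - 1) - 2)) 0.

Definition is_rect_min (F : R -> R -> R) (x1 x2 y1 y2 m : R) : Prop :=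
  (exists x y, x1 <= x <= x2 /\ y1 <= y <= y2 /\ F x y = m) /\
  (forall x y, x1 <= x <= x2 -> y1 <= y <= y2 -> m <= F x y).

(* min{F(x,y) : (x,y) in rectangle}, chosen by Hilbert's epsilon
   (the minimum exists for the continuous F's used below on nonempty compact rectangles). *)
Definition rect_min (F : R -> R -> R) (x1 x2 y1 y2 : R) : R :=
  epsilon (inhabits 0) (is_rect_min F x1 x2 y1 y2).

Definition c1lo (a b r s al be : R) : R :=
  rect_min (fun x y => fmap r a al x y) (c1 a r s be) (H1 r al) 0 (H2 s be).
Definition c2lo (a b r s al be : R) : R :=
  rect_min (fun x y => gmap s b be x y) 0 (H1 r al) (c2 b r s al) (H2 s be).

(* (x,y) in D_{al,be}(h); D_{al,be} = D_{al,be}(0) *)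
Definition inD (a b r s al be h x y : R) : Prop :=
  c1lo a b r s al be - h <= x <= H1 r al /\ c2lo a b r s al be - h <= y <= H2 s be.

Definition is_solution (a b r s : R) (alpha beta x y : nat -> R) : Prop :=
  forall n : nat,
    x (S n) = fmap r a (alpha (S n)) (x n) (y n) /\
    y (S n) = gmap s b (beta (S n)) (x n) (y n).

Definition admissible_seqs (al_lo al_hi be_lo be_hi : R) (alpha beta : nat -> R) : Prop :=
  forall n : nat, (1 <= n)%nat ->
    al_lo < alpha n < al_hi /\ be_lo < beta n < be_hi.

(* Main.v *)
Require Import Defs.
From Stdlib Require Import Reals Lra Lia Psatz ClassicalEpsilon.
From Coquelicot Require Import Coquelicot.
Open Scope R_scope.

Lemma exple (u v : R) : u <= v -> exp u <= exp v.
Proof. intros [H|H]; [left; apply exp_increasing; auto | subst; lra]. Qed.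

Lemma exp_ge1 (u : R) : 0 <= u -> 1 <= exp u.
Proof. intros. pose proof (exp_ineq1_le u). lra. Qed.

Lemma exp_le1 (u : R) : u <= 0 -> exp u <= 1.
Proof. intros. rewrite <- exp_0. apply exple; lra. Qed.

Lemma xexp_le (r x : R) : x * exp (r - x) <= exp (r - 1).
Proof.
  replace (r - 1) with ((r - x) + (x - 1)) by ring. rewrite exp_plus.
  pose proof (exp_ineq1_le (x-1)). pose proof (exp_pos (r-x)). nra.
Qed.

Lemma exp1_ge2 : 2 <= exp 1.
Proof. pose proof (exp_ineq1_le 1). lra. Qed.

Lemma u_deriv (r c : R) :
  derivable_pt_lim (fun t => t * exp (r - t)) c ((1 - c) * exp (r - c)).
Proof.
  apply is_derive_Reals. auto_derive; auto. replace (r + - c) with (r - c) by ring. ring.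
Qed.

Lemma uprime_mono (r c1 c2 : R) : 2 <= c1 -> c1 <= c2 ->
  (1 - c1) * exp (r - c1) <= (1 - c2) * exp (r - c2).
Proof.
  intros H1 H2.
  replace (r - c1) with ((r - c2) + (c2 - c1)) by ring. rewrite exp_plus.
  pose proof (exp_ineq1_le (c2-c1)). pose proof (exp_pos (r-c2)).
  assert ((c2 - 1) <= (c1 - 1) * exp (c2 - c1)) by nra.
  nra.
Qed.

Lemma chord (r x : R) : 2 < x < r ->
  x * exp (r - x) * (r - 2) <= r * (x - 2) + 2 * exp (r - 2) * (r - x).
Proof.
  intros [Hx1 Hx2].
  destruct (MVT_cor2 (fun t => t * exp (r - t)) (fun c => (1 - c) * exp (r - c)) 2 x Hx1)
    as [c1 [E1 [Hc1 Hc1']]].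
  { intros; apply u_deriv. }
  destruct (MVT_cor2 (fun t => t * exp (r - t)) (fun c => (1 - c) * exp (r - c)) x r Hx2)
    as [c2 [E2 [Hc2 Hc2']]].
  { intros; apply u_deriv. }
  simpl in E1, E2.
  replace (r - r) with 0 in E2 by ring. rewrite exp_0 in E2.
  pose proof (uprime_mono r c1 c2 ltac:(lra) ltac:(lra)).
  set (d1 := (1 - c1) * exp (r - c1)) in *.
  set (d2 := (1 - c2) * exp (r - c2)) in *.
  assert (d1 * (x - 2) * (r - x) <= d2 * (r - x) * (x - 2)).
  { assert (0 <= (x-2)*(r-x)) by nra. nra. }
  nra.
Qed.

Lemma psi_bound (r al x : R) : r > 2 -> 0 <= al < 1 -> 0 <= x ->
  x * ((1 - al) * exp (r - x) + al) <= Rmax (H1 r al) x.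
Proof.
  intros Hr Hal Hx. unfold H1.
  pose proof (xexp_le r x) as Hu.
  assert (He: 2 * exp (r - 2) <= exp (r - 1)).
  { replace (r - 1) with ((r - 2) + 1) by ring. rewrite exp_plus.
    pose proof exp1_ge2. pose proof (exp_pos (r-2)). nra. }
  set (A := (1 - al) * exp (r - 1) + 2 * al).
  assert (HA : A <= Rmax (Rmax A r) x) by (eapply Rle_trans; [apply Rmax_l|apply Rmax_l]).
  assert (HR : r <= Rmax (Rmax A r) x) by (eapply Rle_trans; [apply Rmax_r|apply Rmax_l]).
  assert (HX : x <= Rmax (Rmax A r) x) by apply Rmax_r.
  destruct (Rle_lt_dec x 2) as [h2|h2].
  { assert (x * ((1 - al) * exp (r - x) + al) <= A).
    { unfold A. assert ((1-al) * (x * exp (r - x)) <= (1-al) * exp (r-1)) by (apply Rmult_le_compat_l; lra).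
      nra. }
    lra. }
  destruct (Rle_lt_dec r x) as [hr|hr].
  { pose proof (exp_le1 (r - x) ltac:(lra)).
    assert ((1-al) * exp (r - x) + al <= 1) by nra. nra. }
  pose proof (chord r x (conj h2 hr)) as Hc.
  assert (Hc' : x * exp (r - x) * (r - 2) <= r * (x - 2) + exp (r - 1) * (r - x)) by nra.
  assert (x * ((1 - al) * exp (r - x) + al) * (r - 2) <= (r - x) * A + (x - 2) * r).
  { unfold A. nra. }
  set (M := Rmax (Rmax A r) x) in *.
  assert ((r - x) * A + (x - 2) * r <= M * (r - 2)) by nra.
  assert (0 < r - 2) by lra.
  apply (Rmult_le_reg_r (r - 2)); lra.
Qed.

Lemma H1_mono (r al1 al2 : R) : r > 2 -> al1 <= al2 -> H1 r al2 <= H1 r al1.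
Proof.
  intros Hr H. unfold H1.
  pose proof (exp_ineq1_le (r-1)).
  apply Rmax_lub; [|apply Rmax_r].
  eapply Rle_trans; [|apply Rmax_l]. nra.
Qed.

Lemma G1 (r a al_lo al x y : R) : r > 2 -> 0 <= a -> 0 <= al_lo <= al -> al < 1 ->
  0 <= x -> 0 <= y -> fmap r a al x y <= Rmax (H1 r al_lo) x.
Proof.
  intros h1 h2 h3 h4 h5 h6. unfold fmap.
  assert (exp (r - x - a * y) <= exp (r - x)) by (apply exple; nra).
  assert (x * ((1 - al) * exp (r - x - a * y) + al) <= x * ((1 - al) * exp (r - x) + al)).
  { apply Rmult_le_compat_l; auto. nra. }
  pose proof (psi_bound r al x ltac:(lra) ltac:(lra) ltac:(lra)).
  pose proof (H1_mono r al_lo al ltac:(lra) ltac:(lra)).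
  assert (Rmax (Defs.H1 r al) x <= Rmax (Defs.H1 r al_lo) x).
  { apply Rmax_lub; [eapply Rle_trans; [eassumption|apply Rmax_l]|apply Rmax_r]. }
  lra.
Qed.

Lemma G3' (r a al x y : R) : 0 <= x -> 0 <= r - x - a * y -> 0 <= al < 1 ->
  x <= fmap r a al x y.
Proof.
  intros. unfold fmap. pose proof (exp_ge1 _ H0).
  assert (1 <= (1 - al) * exp (r - x - a * y) + al) by nra. nra.
Qed.

Lemma G3 (r a al al_hi d x y : R) : 0 <= x -> d <= r - x - a * y -> 0 <= d ->
  0 <= al <= al_hi -> al_hi < 1 ->
  ((1 - al_hi) * exp d + al_hi) * x <= fmap r a al x y.
Proof.
  intros. unfold fmap. pose proof (exple _ _ H0). pose proof (exp_ge1 _ H1).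
  assert ((1 - al_hi) * exp d + al_hi <= (1 - al) * exp (r - x - a * y) + al) by nra.
  rewrite (Rmult_comm _ x); apply Rmult_le_compat_l; auto.
Qed.

Lemma G4 (r a al_lo al x y : R) : 0 <= x -> 0 <= al_lo <= al -> al < 1 ->
  al_lo * x <= fmap r a al x y.
Proof.
  intros. unfold fmap. pose proof (exp_pos (r - x - a * y)).
  assert (0 <= x * ((1 - al) * exp (r - x - a * y))).
  { apply Rmult_le_pos; [lra|]. apply Rmult_le_pos; lra. }
  nra.
Qed.

Lemma G5 (r a al al_hi T x y : R) : 0 <= r -> 0 <= a -> 0 <= y -> r <= T -> T <= x ->
  0 <= al <= al_hi -> al_hi < 1 ->
  fmap r a al x y <= ((1 - al_hi) * exp (r - T) + al_hi) * x.
Proof.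
  intros. unfold fmap.
  assert (exp (r - x - a * y) <= exp (r - T)) by (apply exple; nra).
  pose proof (exp_le1 (r - T) ltac:(lra)). pose proof (exp_pos (r - x - a*y)).
  assert ((1 - al) * exp (r - x - a * y) + al <= (1 - al_hi) * exp (r - T) + al_hi) by nra.
  rewrite (Rmult_comm _ x). apply Rmult_le_compat_l; lra.
Qed.

Lemma G6 (r a al al_hi m x y : R) : 0 <= a -> 0 <= m <= y -> r <= x -> 0 < r ->
  0 <= al <= al_hi -> al_hi < 1 ->
  fmap r a al x y <= x - r * (1 - al_hi) * (1 - exp (- (a * m))).
Proof.
  intros. unfold fmap.
  assert (exp (r - x - a * y) <= exp (- (a * m))) by (apply exple; nra).
  pose proof (exp_le1 (- (a * m)) ltac:(nra)). pose proof (exp_pos (r - x - a*y)).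
  assert (r * ((1 - al_hi) * (1 - exp (- (a * m)))) <= x * ((1 - al) * (1 - exp (r - x - a * y)))).
  { apply Rmult_le_compat; nra. }
  nra.
Qed.

Lemma G2 (r a al_lo al Hx Hy mlo L x y : R) :
  (forall x y, r - a * Hy <= x <= Hx -> 0 <= y <= Hy -> mlo <= fmap r a al_lo x y) ->
  0 <= a -> 0 <= al_lo <= al -> al < 1 -> 0 <= L -> L <= mlo ->
  L <= x <= Hx -> 0 <= y <= Hy -> L <= fmap r a al x y.
Proof.
  intros Hm Ha Hal Hal1 HL HLm Hx1 Hy1.
  destruct (Rle_lt_dec 0 (r - x - a * y)) as [E|E].
  { pose proof (G3' r a al x y ltac:(lra) E ltac:(lra)). lra. }
  assert (r - a * Hy <= x) by nra.
  pose proof (Hm x y ltac:(lra) Hy1).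
  unfold fmap in *.
  pose proof (exp_le1 _ (Rlt_le _ _ E)).
  assert (x * ((1 - al_lo) * exp (r - x - a * y) + al_lo) <= x * ((1 - al) * exp (r - x - a * y) + al)).
  { apply Rmult_le_compat_l; nra. }
  lra.
Qed.

Lemma gmap_fmap (s b be x y : R) : gmap s b be x y = fmap s b be y x.
Proof. unfold gmap, fmap. replace (s - b * x - y) with (s - y - b * x) by ring. ring. Qed.

Lemma fmap_cont (r a al y c : R) : continuity_pt (fun x => fmap r a al x y) c.
Proof.
  apply derivable_continuous_pt. eexists. apply is_derive_Reals. unfold fmap.
  auto_derive; [auto | reflexivity].
Qed.

Lemma rect_min_exists (r a al cl Hx Hy : R) : 0 <= a -> 0 < cl <= Hx -> 0 <= Hy -> 0 <= al < 1 ->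
  exists m, is_rect_min (fun x y => fmap r a al x y) cl Hx 0 Hy m.
Proof.
  intros Ha Hc HHy Hal.
  destruct (continuity_ab_min (fun x => fmap r a al x Hy) cl Hx ltac:(lra)
     (fun c _ => fmap_cont r a al Hy c)) as [mx [Hmin Hmx]].
  exists (fmap r a al mx Hy). split.
  - exists mx, Hy. repeat split; lra.
  - intros x y Hx1 Hy1. apply Rle_trans with (fmap r a al x Hy); [apply Hmin; auto|].
    unfold fmap.
    assert (exp (r - x - a * Hy) <= exp (r - x - a * y)) by (apply exple; nra).
    apply Rmult_le_compat_l; [lra|]. nra.
Qed.

Lemma c1lo_prop (a b r s al be : R) : 0 <= a -> 0 < Defs.c1 a r s be <= H1 r al ->
  0 <= H2 s be -> 0 <= al < 1 ->
  forall x y, Defs.c1 a r s be <= x <= H1 r al -> 0 <= y <= H2 s be ->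
    c1lo a b r s al be <= fmap r a al x y.
Proof.
  intros Ha Hc HH Hal.
  pose proof (rect_min_exists r a al (Defs.c1 a r s be) (H1 r al) (H2 s be) Ha Hc HH Hal) as Ex.
  unfold c1lo, rect_min.
  pose proof (epsilon_spec (inhabits 0) _ Ex) as [_ P].
  exact P.
Qed.

Lemma c2lo_prop (a b r s al be : R) : 0 <= b -> 0 < Defs.c2 b r s al <= H2 s be ->
  0 <= H1 r al -> 0 <= be < 1 ->
  forall x y, 0 <= x <= H1 r al -> Defs.c2 b r s al <= y <= H2 s be ->
    c2lo a b r s al be <= gmap s b be x y.
Proof.
  intros Hb Hc HH Hal.
  destruct (rect_min_exists s b be (Defs.c2 b r s al) (H2 s be) (H1 r al) Hb Hc HH Hal)
    as [m [[u [v [Hu [Hv Hm]]]] Pm]].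
  assert (Ex : exists m, is_rect_min (fun x y => gmap s b be x y) 0 (H1 r al) (Defs.c2 b r s al) (H2 s be) m).
  { exists m. split.
    - exists v, u. repeat split; try lra. rewrite gmap_fmap. exact Hm.
    - intros x y Hx Hy. rewrite gmap_fmap. apply Pm; auto. }
  unfold c2lo, rect_min.
  pose proof (epsilon_spec (inhabits 0) _ Ex) as [_ P].
  exact P.
Qed.

Lemma from_N (P : nat -> Prop) (N : nat) : P N ->
  (forall n, (N <= n)%nat -> P n -> P (S n)) -> forall n, (N <= n)%nat -> P n.
Proof. intros HN Hs n Hn. induction Hn; auto. Qed.

Lemma lin_dec (T d W : R) : 0 < d -> exists K : nat, forall (w : nat -> R) (N : nat),
  (forall n, (N <= n)%nat -> T < w n -> w (S n) <= w n - d) ->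
  (forall n, (N <= n)%nat -> w n <= T -> w (S n) <= T) ->
  w N <= W -> forall n, (N + K <= n)%nat -> w n <= T.
Proof.
  intros Hd. destruct (INR_unbounded ((W - T) / d)) as [K HK].
  exists K. intros w N Hdec Hstay HW.
  assert (Hb : forall k, w (N + k)%nat <= T \/ w (N + k)%nat <= W - INR k * d).
  { induction k as [|k IH].
    - right. rewrite Nat.add_0_r. simpl. lra.
    - rewrite Nat.add_succ_r.
      destruct (Rle_lt_dec (w (N + k)%nat) T) as [h|h].
      + left. apply Hstay; [lia|auto].
      + right. destruct IH as [IH|IH]; [lra|].
        pose proof (Hdec (N + k)%nat ltac:(lia) h). rewrite S_INR. lra. }
  intros n Hn. replace n with (N + (n - N))%nat by lia.
  destruct (Hb (n - N)%nat) as [h|h]; auto.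
  assert (INR K <= INR (n - N)) by (apply le_INR; lia).
  assert ((W - T) / d * d = W - T) by (field; lra).
  assert (W - T < INR K * d) by nra.
  nra.
Qed.

Lemma lin_inc (T d W : R) : 0 < d -> exists K : nat, forall (w : nat -> R) (N : nat),
  (forall n, (N <= n)%nat -> w n < T -> w n + d <= w (S n)) ->
  (forall n, (N <= n)%nat -> T <= w n -> T <= w (S n)) ->
  W <= w N -> forall n, (N + K <= n)%nat -> T <= w n.
Proof.
  intros Hd. destruct (lin_dec (-T) d (-W) Hd) as [K HK]. exists K.
  intros w N H1' H2' HW n Hn.
  assert (- w n <= - T).
  { apply (HK (fun n => - w n) N); auto.
    - intros m Hm Hlt. pose proof (H1' m Hm ltac:(lra)). lra.
    - intros m Hm Hle. pose proof (H2' m Hm ltac:(lra)). lra.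
    - lra. }
  lra.
Qed.

Lemma pow_lower (al : R) (w : nat -> R) : 0 <= al -> (forall n, al * w n <= w (S n)) ->
  forall n, w O * al ^ n <= w n.
Proof.
  intros Hal Hs n. induction n as [|n IH].
  - simpl. lra.
  - simpl. pose proof (Hs n).
    assert (al * (w O * al ^ n) <= al * w n) by (apply Rmult_le_compat_l; auto).
    lra.
Qed.

Definition comp (r a al_lo al_hi : R) (al u v : nat -> R) : Prop :=
  (forall n, u (S n) = fmap r a (al (S n)) (u n) (v n)) /\
  (forall n, al_lo < al (S n) < al_hi) /\ (forall n, 0 < u n) /\ (forall n, 0 < v n).

Definition par (r a al_lo al_hi : R) : Prop :=
  r > 2 /\ 0 < a /\ 0 < al_lo /\ al_lo < al_hi /\ al_hi < 1.

Lemma H1_ge (r al : R) : r <= H1 r al.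
Proof. unfold H1. apply Rmax_r. Qed.

Lemma phaseA (r a al_lo al_hi T u0 : R) : par r a al_lo al_hi -> H1 r al_lo < T ->
  exists K : nat, forall al u v, comp r a al_lo al_hi al u v -> u O = u0 ->
    forall n, (K <= n)%nat -> u n <= T.
Proof.
  intros [Hr [Ha [Hl [Hlh Hh]]]] HT.
  pose proof (H1_ge r al_lo).
  set (q := (1 - al_hi) * exp (r - T) + al_hi).
  assert (exp (r - T) < 1) by (rewrite <- exp_0; apply exp_increasing; lra).
  pose proof (exp_pos (r - T)).
  assert (q < 1) by (unfold q; nra).
  destruct (lin_dec T ((1 - q) * T) u0 ltac:(nra)) as [K HK].
  exists K. intros al u v [Hst [Hal [Hu Hv]]] Hu0 n Hn.
  apply (HK u O); [ | | rewrite Hu0; lra | lia ].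
  - intros m _ Hm. rewrite Hst.
    pose proof (Hal m). pose proof (Hv m).
    pose proof (G5 r a (al (S m)) al_hi T (u m) (v m) ltac:(lra) ltac:(lra) ltac:(lra) ltac:(lra) ltac:(lra) ltac:(lra) ltac:(lra)).
    fold q in H5. nra.
  - intros m _ Hm. rewrite Hst.
    pose proof (Hal m). pose proof (Hv m). pose proof (Hu m).
    pose proof (G1 r a al_lo (al (S m)) (u m) (v m) ltac:(lra) ltac:(lra) ltac:(lra) ltac:(lra) ltac:(lra) ltac:(lra)).
    assert (Rmax (Defs.H1 r al_lo) (u m) <= T) by (apply Rmax_lub; lra).
    lra.
Qed.

Lemma comp_lower (r a al_lo al_hi : R) (al u v : nat -> R) :
  par r a al_lo al_hi -> comp r a al_lo al_hi al u v -> forall n, u O * al_lo ^ n <= u n.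
Proof.
  intros [Hr [Ha [Hl [Hlh Hh]]]] [Hst [Hal [Hu Hv]]].
  apply pow_lower; [lra|]. intros n. rewrite Hst. pose proof (Hal n). pose proof (Hu n).
  apply G4; lra.
Qed.

Lemma phaseB (r a al_lo al_hi V d : R) (N : nat) : par r a al_lo al_hi -> 0 < d ->
  2 * d <= r - a * V ->
  forall al u v, comp r a al_lo al_hi al u v -> (forall n, (N <= n)%nat -> v n <= V) ->
  forall n, (N <= n)%nat -> Rmin (u O * al_lo ^ N) (al_lo * d) <= u n.
Proof.
  intros Hp Hd HV al u v Hc HvV.
  pose proof (comp_lower _ _ _ _ _ _ _ Hp Hc N) as HN.
  destruct Hp as [Hr [Ha [Hl [Hlh Hh]]]]. destruct Hc as [Hst [Hal [Hu Hv]]].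
  apply from_N.
  - pose proof (Rmin_l (u O * al_lo ^ N) (al_lo * d)). lra.
  - intros n Hn IH. rewrite Hst. pose proof (Hal n). pose proof (Hu n). pose proof (HvV n Hn).
    destruct (Rle_lt_dec (u n) d) as [h|h].
    + assert (0 <= r - u n - a * v n) by nra.
      pose proof (G3' r a (al (S n)) (u n) (v n) ltac:(lra) H2 ltac:(lra)). lra.
    + pose proof (G4 r a al_lo (al (S n)) (u n) (v n) ltac:(lra) ltac:(lra) ltac:(lra)).
      pose proof (Rmin_r (u O * al_lo ^ N) (al_lo * d)). nra.
Qed.

Lemma phaseC (r a al_lo al_hi T l : R) : par r a al_lo al_hi -> 0 < l ->
  exists K : nat, forall al u v N, comp r a al_lo al_hi al u v ->
    (forall n, (N <= n)%nat -> l <= v n) -> u N <= T ->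
    forall n, (N + K <= n)%nat -> u n <= H1 r al_lo.
Proof.
  intros [Hr [Ha [Hl [Hlh Hh]]]] Hlp.
  assert (exp (- (a * l)) < 1) by (rewrite <- exp_0; apply exp_increasing; nra).
  assert (Hd : 0 < r * (1 - al_hi) * (1 - exp (- (a * l)))).
  { apply Rmult_lt_0_compat; [|lra]. apply Rmult_lt_0_compat; lra. }
  destruct (lin_dec (Defs.H1 r al_lo) _ T Hd) as [K HK].
  exists K. intros al u v N [Hst [Hal [Hu Hv]]] Hvl HuT n Hn.
  pose proof (H1_ge r al_lo).
  apply (HK u N); auto.
  - intros m Hm Hlt. rewrite Hst. pose proof (Hal m). pose proof (Hvl m Hm).
    apply (G6 r a (al (S m)) al_hi l (u m) (v m)); lra.
  - intros m _ Hm. rewrite Hst.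
    pose proof (Hal m). pose proof (Hv m). pose proof (Hu m).
    pose proof (G1 r a al_lo (al (S m)) (u m) (v m) ltac:(lra) ltac:(lra) ltac:(lra) ltac:(lra) ltac:(lra) ltac:(lra)).
    assert (Rmax (Defs.H1 r al_lo) (u m) <= Defs.H1 r al_lo) by (apply Rmax_lub; lra).
    lra.
Qed.

Lemma phaseD (r a al_lo al_hi Hy mlo h l0 : R) : par r a al_lo al_hi -> 0 <= Hy ->
  (forall x y, r - a * Hy <= x <= H1 r al_lo -> 0 <= y <= Hy -> mlo <= fmap r a al_lo x y) ->
  mlo <= r - a * Hy -> 0 < h < mlo -> 0 < l0 ->
  exists K : nat, forall al u v N, comp r a al_lo al_hi al u v ->
    (forall n, (N <= n)%nat -> u n <= H1 r al_lo /\ v n <= Hy) -> l0 <= u N ->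
    forall n, (N + K <= n)%nat -> mlo - h <= u n.
Proof.
  intros [Hr [Ha [Hl [Hlh Hh]]]] HHy HP Hmc Hhm Hl0.
  set (l' := Rmin l0 (mlo - h)).
  assert (Hl' : 0 < l') by (unfold l'; apply Rmin_glb_lt; lra).
  assert (Heh : 1 < exp h) by (rewrite <- exp_0; apply exp_increasing; lra).
  set (kap := (1 - al_hi) * exp h + al_hi).
  assert (Hk : 1 < kap) by (unfold kap; nra).
  destruct (lin_inc (mlo - h) ((kap - 1) * l') l' ltac:(nra)) as [K HK].
  exists K. intros al u v N Hc Hb HlN.
  destruct Hc as [Hst [Hal [Hu Hv]]].
  assert (Hfl : forall n, (N <= n)%nat -> l' <= u n).
  { apply from_N.
    - pose proof (Rmin_l l0 (mlo - h)). fold l' in H. lra.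
    - intros n Hn IH. rewrite Hst. pose proof (Hal n). pose proof (Hu n). pose proof (Hv n).
      destruct (Hb n Hn) as [Hb1 Hb2].
      destruct (Rlt_le_dec (u n) (mlo - h)) as [hh|hh].
      + assert (0 <= r - u n - a * v n) by nra.
        pose proof (G3' r a (al (S n)) (u n) (v n) ltac:(lra) H2 ltac:(lra)). lra.
      + pose proof (G2 r a al_lo (al (S n)) (Defs.H1 r al_lo) Hy mlo (mlo - h) (u n) (v n)
          HP ltac:(lra) ltac:(lra) ltac:(lra) ltac:(lra) ltac:(lra) ltac:(lra) ltac:(lra)).
        pose proof (Rmin_r l0 (mlo - h)). fold l' in H3. lra. }
  apply (HK u N).
  - intros n Hn hh. rewrite Hst. pose proof (Hal n). pose proof (Hu n). pose proof (Hv n).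
    destruct (Hb n Hn) as [Hb1 Hb2]. pose proof (Hfl n Hn).
    assert (h <= r - u n - a * v n) by nra.
    pose proof (G3 r a (al (S n)) al_hi h (u n) (v n) ltac:(lra) H3 ltac:(lra) ltac:(lra) ltac:(lra)).
    fold kap in H4. nra.
  - intros n Hn hh. rewrite Hst. pose proof (Hal n). pose proof (Hu n). pose proof (Hv n).
    destruct (Hb n Hn) as [Hb1 Hb2].
    apply (G2 r a al_lo (al (S n)) (Defs.H1 r al_lo) Hy mlo (mlo - h) (u n) (v n) HP); lra.
  - auto.
Qed.

Lemma c_pos (r a s be : R) : 0 < a -> r > a * s -> s > 2 -> beta_t a r s < be ->
  0 < r - a * H2 s be.
Proof.
  intros Ha Hras Hs Hb. unfold beta_t in Hb. unfold H2.
  set (E := exp (s - 1)) in *.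
  assert (HE : 2 < E) by (unfold E; pose proof (exp_ineq1_le (s - 1)); lra).
  set (X := (E - r / a) / (E - 2)) in *.
  assert (X < be) by (eapply Rle_lt_trans; [apply Rmax_l|exact Hb]).
  assert (HX : E - r / a = X * (E - 2)) by (unfold X; field; lra).
  assert (Hra : a * (r / a) = r) by (field; lra).
  assert (X * (E - 2) < be * (E - 2)) by (apply Rmult_lt_compat_r; lra).
  assert ((1 - be) * E + 2 * be < r / a) by lra.
  assert (a * ((1 - be) * E + 2 * be) < a * (r / a)) by (apply Rmult_lt_compat_l; lra).
  apply Rmax_case_strong; intros; lra.
Qed.

Theorem mainTheorem4 (a b r s al_lo be_lo al_hi be_hi h : R) :
  0 < a < 1 -> 0 < b < 1 -> r > 2 -> s > 2 -> r > a * s -> s > b * r ->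
  alpha_t b r s < al_lo < 1 -> beta_t a r s < be_lo < 1 ->
  al_lo < al_hi < 1 -> be_lo < be_hi < 1 ->
  0 < h < Rmin (c1lo a b r s al_lo be_lo) (c2lo a b r s al_lo be_lo) ->
  (forall alpha beta x y : nat -> R,
     admissible_seqs al_lo al_hi be_lo be_hi alpha beta ->
     is_solution a b r s alpha beta x y ->
     0 < x O -> 0 < y O ->
     ((inD a b r s al_lo be_lo 0 (x O) (y O) ->
        forall n : nat, (1 <= n)%nat -> inD a b r s al_lo be_lo 0 (x n) (y n)) /\
      (inD a b r s al_lo be_lo h (x O) (y O) ->
        forall n : nat, (1 <= n)%nat -> inD a b r s al_lo be_lo h (x n) (y n)))) /\
  (forall x0 y0 : R, 0 < x0 -> 0 < y0 ->
     ~ inD a b r s al_lo be_lo h x0 y0 ->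
     exists St : nat, (1 <= St)%nat /\
       forall alpha beta x y : nat -> R,
         admissible_seqs al_lo al_hi be_lo be_hi alpha beta ->
         is_solution a b r s alpha beta x y ->
         x O = x0 -> y O = y0 ->
         forall n : nat, (St <= n)%nat -> inD a b r s al_lo be_lo h (x n) (y n)).
Proof.
  intros Ha Hb Hr Hs Has Hbr Hal Hbe Halh Hbeh Hh.
  assert (Hat : 0 <= alpha_t b r s) by (unfold alpha_t; apply Rmax_r).
  assert (Hbt : 0 <= beta_t a r s) by (unfold beta_t; apply Rmax_r).
  set (Hx := Defs.H1 r al_lo). set (Hy := H2 s be_lo).
  assert (HxR : r <= Hx) by apply H1_ge.
  assert (HyS : s <= Hy) by apply H1_ge.
  assert (Hcx : 0 < r - a * Hy) by (apply c_pos; lra).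
  assert (Hcy : 0 < s - b * Hx) by exact (c_pos s b r al_lo ltac:(lra) ltac:(lra) ltac:(lra) (proj1 Hal)).
  set (mx := c1lo a b r s al_lo be_lo). set (my := c2lo a b r s al_lo be_lo).
  assert (Px : forall x y, r - a * Hy <= x <= Hx -> 0 <= y <= Hy -> mx <= fmap r a al_lo x y).
  { intros x y Hx1 Hy1. apply (c1lo_prop a b r s al_lo be_lo); auto; try lra.
    all: unfold Defs.c1; fold Hx Hy; try split; nra. }
  assert (Py : forall u v, s - b * Hx <= u <= Hy -> 0 <= v <= Hx -> my <= fmap s b be_lo u v).
  { intros u v Hu1 Hv1. rewrite <- gmap_fmap.
    apply (c2lo_prop a b r s al_lo be_lo); auto; try lra.
    all: unfold Defs.c2; fold Hx Hy; try split; nra. }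
  assert (Hmx : mx <= r - a * Hy).
  { pose proof (Px (r - a * Hy) Hy ltac:(nra) ltac:(lra)) as P.
    unfold fmap in P. replace (r - (r - a * Hy) - a * Hy) with 0 in P by ring.
    rewrite exp_0 in P. ring_simplify in P. lra. }
  assert (Hmy : my <= s - b * Hx).
  { pose proof (Py (s - b * Hx) Hx ltac:(nra) ltac:(lra)) as P.
    unfold fmap in P. replace (s - (s - b * Hx) - b * Hx) with 0 in P by ring.
    rewrite exp_0 in P. ring_simplify in P. lra. }
  assert (Hhx : h < mx) by (pose proof (Rmin_l mx my); unfold mx, my in *; lra).
  assert (Hhy : h < my) by (pose proof (Rmin_r mx my); unfold mx, my in *; lra).
  assert (parX : par r a al_lo al_hi) by (repeat split; lra).
  assert (parY : par s b be_lo be_hi) by (repeat split; lra).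
  assert (Hcomp : forall alpha beta x y,
     admissible_seqs al_lo al_hi be_lo be_hi alpha beta ->
     is_solution a b r s alpha beta x y -> 0 < x O -> 0 < y O ->
     comp r a al_lo al_hi alpha x y /\ comp s b be_lo be_hi beta y x).
  { intros alpha beta x y Had Hso Hx0 Hy0.
    assert (Hab : forall n, al_lo < alpha (S n) < al_hi /\ be_lo < beta (S n) < be_hi).
    { intros n. apply Had. lia. }
    assert (Hpos : forall n, 0 < x n /\ 0 < y n).
    { induction n as [|n IH]; [auto|].
      destruct (Hso n) as [E1 E2]. destruct (Hab n) as [[A1 A2] [B1 B2]]. destruct IH.
      rewrite E1, E2, gmap_fmap. split.
      - pose proof (G4 r a al_lo (alpha (S n)) (x n) (y n) ltac:(lra) ltac:(lra) ltac:(lra)). nra.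
      - pose proof (G4 s b be_lo (beta (S n)) (y n) (x n) ltac:(lra) ltac:(lra) ltac:(lra)). nra. }
    split; (split; [|split; [|split]]).
    - intro n. apply Hso.
    - intro n. apply Hab.
    - intro n. apply Hpos.
    - intro n. apply Hpos.
    - intro n. rewrite <- gmap_fmap. apply Hso.
    - intro n. apply Hab.
    - intro n. apply Hpos.
    - intro n. apply Hpos. }
  split.
  - intros alpha beta x y Had Hso Hx0 Hy0.
    destruct (Hcomp alpha beta x y Had Hso Hx0 Hy0) as [[Sx [Ax [Px' Py']]] [Sy [Ay _]]].
    assert (Inv : forall h', 0 <= h' <= h -> inD a b r s al_lo be_lo h' (x O) (y O) ->
              forall n, inD a b r s al_lo be_lo h' (x n) (y n)).
    { intros h' Hh' HD m.
      apply (from_N (fun n => inD a b r s al_lo be_lo h' (x n) (y n)) O); [auto| |lia].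
      intros n _ [[X1 X2] [Y1 Y2]]. fold mx my Hx Hy in X1, X2, Y1, Y2 |- *.
      unfold inD. fold mx my Hx Hy.
      pose proof (Ax n). pose proof (Ay n). pose proof (Px' n). pose proof (Py' n).
      rewrite Sx, Sy. split; split.
      - apply (G2 r a al_lo (alpha (S n)) Hx Hy mx (mx - h') (x n) (y n) Px); lra.
      - pose proof (G1 r a al_lo (alpha (S n)) (x n) (y n) ltac:(lra) ltac:(lra) ltac:(lra) ltac:(lra) ltac:(lra) ltac:(lra)).
        fold Hx in H3. rewrite Rmax_left in H3; lra.
      - apply (G2 s b be_lo (beta (S n)) Hy Hx my (my - h') (y n) (x n) Py); lra.
      - pose proof (G1 s b be_lo (beta (S n)) (y n) (x n) ltac:(lra) ltac:(lra) ltac:(lra) ltac:(lra) ltac:(lra) ltac:(lra)).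
        change (Defs.H1 s be_lo) with Hy in H3. rewrite Rmax_left in H3; lra. }
    split; intros HD n _; apply Inv; auto; lra.
  - intros x0 y0 Hx0 Hy0 _.
    set (cx := r - a * Hy) in *. set (cy := s - b * Hx) in *.
    set (Tx := Hx + cy / (2 * b)). set (Ty := Hy + cx / (2 * a)).
    assert (HTx : s - b * Tx = cy / 2) by (unfold Tx, cy; field; lra).
    assert (HTy : r - a * Ty = cx / 2) by (unfold Ty, cx; field; lra).
    assert (0 < cy / (2 * b)) by (apply Rdiv_lt_0_compat; lra).
    assert (0 < cx / (2 * a)) by (apply Rdiv_lt_0_compat; lra).
    assert (HTx' : Hx < Tx) by (unfold Tx; lra).
    assert (HTy' : Hy < Ty) by (unfold Ty; lra).
    destruct (phaseA r a al_lo al_hi Tx x0 parX HTx') as [K1x HK1x].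
    destruct (phaseA s b be_lo be_hi Ty y0 parY HTy') as [K1y HK1y].
    set (N1 := (K1x + K1y)%nat).
    set (ly := Rmin (y0 * be_lo ^ N1) (be_lo * (cy / 4))).
    set (lx := Rmin (x0 * al_lo ^ N1) (al_lo * (cx / 4))).
    assert (Hly : 0 < ly).
    { unfold ly. apply Rmin_glb_lt; apply Rmult_lt_0_compat; try lra. apply pow_lt; lra. }
    assert (Hlx : 0 < lx).
    { unfold lx. apply Rmin_glb_lt; apply Rmult_lt_0_compat; try lra. apply pow_lt; lra. }
    destruct (phaseC r a al_lo al_hi Tx ly parX Hly) as [K2x HK2x].
    destruct (phaseC s b be_lo be_hi Ty lx parY Hlx) as [K2y HK2y].
    set (N3 := (N1 + K2x + K2y)%nat).
    assert (Hl0x : 0 < x0 * al_lo ^ N3) by (apply Rmult_lt_0_compat; [lra|apply pow_lt; lra]).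
    assert (Hl0y : 0 < y0 * be_lo ^ N3) by (apply Rmult_lt_0_compat; [lra|apply pow_lt; lra]).
    destruct (phaseD r a al_lo al_hi Hy mx h _ parX ltac:(lra) Px Hmx ltac:(lra) Hl0x) as [K4x HK4x].
    destruct (phaseD s b be_lo be_hi Hx my h _ parY ltac:(lra) Py Hmy ltac:(lra) Hl0y) as [K4y HK4y].
    exists (N3 + K4x + K4y + 1)%nat. split; [lia|].
    intros alpha beta x y Had Hso Ex Ey k Hk.
    destruct (Hcomp alpha beta x y Had Hso ltac:(lra) ltac:(lra)) as [CX CY].
    assert (A1 : forall n, (N1 <= n)%nat -> x n <= Tx /\ y n <= Ty).
    { intros n Hn. split; [apply (HK1x alpha x y CX Ex)|apply (HK1y beta y x CY Ey)]; unfold N1 in Hn; lia. }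
    assert (B1 : forall n, (N1 <= n)%nat -> ly <= y n /\ lx <= x n).
    { intros n Hn. split.
      - pose proof (phaseB s b be_lo be_hi Tx (cy / 4) N1 parY ltac:(lra) ltac:(lra) beta y x CY
          (fun m Hm => proj1 (A1 m Hm)) n Hn) as PB. rewrite Ey in PB. exact PB.
      - pose proof (phaseB r a al_lo al_hi Ty (cx / 4) N1 parX ltac:(lra) ltac:(lra) alpha x y CX
          (fun m Hm => proj2 (A1 m Hm)) n Hn) as PB. rewrite Ex in PB. exact PB. }
    assert (C1 : forall n, (N3 <= n)%nat -> x n <= Hx /\ y n <= Hy).
    { intros n Hn. split.
      - apply (HK2x alpha x y N1 CX (fun m Hm => proj1 (B1 m Hm)) (proj1 (A1 N1 (le_n _)))).
        unfold N3 in Hn. lia.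
      - apply (HK2y beta y x N1 CY (fun m Hm => proj2 (B1 m Hm)) (proj2 (A1 N1 (le_n _)))).
        unfold N3 in Hn. lia. }
    assert (D1 : mx - h <= x k).
    { apply (HK4x alpha x y N3 CX C1).
      - pose proof (comp_lower _ _ _ _ _ _ _ parX CX N3) as PB. rewrite Ex in PB. exact PB.
      - lia. }
    assert (D2 : my - h <= y k).
    { apply (HK4y beta y x N3 CY (fun m Hm => conj (proj2 (C1 m Hm)) (proj1 (C1 m Hm)))).
      - pose proof (comp_lower _ _ _ _ _ _ _ parY CY N3) as PB. rewrite Ey in PB. exact PB.
      - lia. }
    destruct (C1 k ltac:(lia)).
    unfold inD. fold mx my Hx Hy. lra.
Qed.
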